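(* Let $k$ be an algebraically closed field of characteristic zero. Let $A$ be an integral normal $k$-algebra of finite type endowed with a locally nilpotent $k$-derivation $\partial$, let $F_n=\ker\partial^{n+1}$ ($n\geq0$), $F_{-1}=\{0\}$, and let $R(A,\partial)=\bigoplus_{n\geq0}F_n$ be its Rees algebra. The following are equivalent: (1) $R(A,\partial)$ is finitely generated over $k$; (2) the associated graded algebra $\mathrm{gr}_\partial A=\bigoplus_{n\geq0}F_n/F_{n-1}$ is finitely generated over $k$; (3) the $k$-algebra $A_0=F_0=\ker\partial$ is finitely generated and $R(A,\partial)_+=\bigoplus_{n>0}F_n$ is a finitely generated $R(A,\partial)$-module.
   Context: $R(A,\partial)$ and $\mathrm{gr}_\partial A$ carry the multiplication induced by that of $A$ (note $F_mF_n\subseteq F_{m+n}$). Equivalently $R(A,\partial)$ is the graded subalgebra $\bigoplus_n F_n\upsilon^n$ of $A[\upsilon]$. *)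

(* Defs.v *)
From HB Require Import structures.
From mathcomp Require Import all_boot all_order all_algebra.
From mathcomp Require Import fraction.
Set Implicit Arguments. Unset Strict Implicit. Unset Printing Implicit Defensive.
Import GRing.Theory.
Local Open Scope ring_scope.

(* A commutative k-algebra is an idomain A together with a structure ring
   morphism iota : k -> A.  Subalgebras are predicates (B -> Prop). *)

Section Defs.
Variable k : fieldType.

Definition ksubalg_closed (B : nzRingType) (j : k -> B) (T : B -> Prop) :=
  [/\ forall c, T (j c),
      forall x y, T x -> T y -> T (x + y) &
      forall x y, T x -> T y -> T (x * y)].

Definition in_gen_subalg (B : nzRingType) (j : k -> B) (s : seq B) (x : B) :=
  forall T : B -> Prop, ksubalg_closed j T -> (forall y, y \in s -> T y) -> T x.

Definition fg_subalg (B : nzRingType) (j : k -> B) (S : B -> Prop) :=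
  exists s : seq B, (forall y, y \in s -> S y) /\
                    (forall x, S x <-> in_gen_subalg j s x).

Definition finite_type (A : nzRingType) (iota : k -> A) :=
  fg_subalg iota (fun _ => True).

Definition normal_domain (A : idomainType) :=
  forall x : {fraction A}, integralOver (@tofrac A) x -> exists a : A, x = tofrac a.

Definition is_kderivation (A : comNzRingType) (iota : {rmorphism k -> A})
    (D : A -> A) :=
  [/\ forall x y, D (x + y) = D x + D y,
      forall x y, D (x * y) = D x * y + x * D y &
      forall c x, D (iota c * x) = iota c * D x].

Definition locally_nilpotent (A : nzRingType) (D : A -> A) :=
  forall a, exists n, iter n D a = 0.

Definition Filt (A : nzRingType) (D : A -> A) (n : nat) (a : A) :=
  iter n.+1 D a = 0.

Definition Filt_prev (A : nzRingType) (D : A -> A) (n : nat) (a : A) :=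
  if n is m.+1 then Filt D m a else a = 0.

(* Rees algebra R(A,D) = (+)_n F_n v^n, as a subset of A[v] *)
Definition rees (A : nzRingType) (D : A -> A) (p : {poly A}) :=
  forall n, Filt D n p`_n.

Definition rees_plus (A : nzRingType) (D : A -> A) (p : {poly A}) :=
  rees D p /\ p`_0 = 0.

Definition polyj (A : nzRingType) (iota : k -> A) (c : k) : {poly A} :=
  (iota c)%:P.

(* gr_D A = (+)_n F_n/F_(n-1): its elements are represented by elements of
   the Rees algebra, two representatives being equal in gr_D A iff their
   n-th components differ by an element of F_(n-1) for every n; sum and
   product are induced by those of A[v]. *)
Definition gr_equiv (A : nzRingType) (D : A -> A) (p q : {poly A}) :=
  forall n, Filt_prev D n (p - q)`_n.

(* gr_D A is a finitely generated k-algebra: finitely many classes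
   generate it, i.e. every class has a representative which is a
   k-polynomial expression in the chosen representatives. *)
Definition gr_fg (A : nzRingType) (iota : k -> A) (D : A -> A) :=
  exists s : seq {poly A}, (forall y, y \in s -> rees D y) /\
    forall p, rees D p ->
      exists q, in_gen_subalg (polyj iota) s q /\ gr_equiv D p q.

Definition fg_submodule (B : nzRingType) (S M : B -> Prop) :=
  exists (n : nat) (g : 'I_n -> B), (forall i, M (g i)) /\
    forall x, M x -> exists c : 'I_n -> B,
      (forall i, S (c i)) /\ x = \sum_(i < n) c i * g i.

End Defs.

(* Main.v *)
Require Import Defs.
From HB Require Import structures.
From mathcomp Require Import all_boot all_order all_algebra.
From mathcomp Require Import fraction.
From mathcomp Require Import ring.
Set Implicit Arguments. Unset Strict Implicit. Unset Printing Implicit Defensive.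
Import GRing.Theory.
Local Open Scope ring_scope.

Section Aux.
Variable k : fieldType.
Variable A : idomainType.
Variable io : {rmorphism k -> A}.
Variable D : A -> A.
Hypothesis HD : is_kderivation io D.

Lemma Dadd x y : D (x + y) = D x + D y.
Proof. by case: HD. Qed.
Lemma Dmul x y : D (x * y) = D x * y + x * D y.
Proof. by case: HD. Qed.

Lemma D0 : D 0 = 0.
Proof. have H := Dadd 0 0; rewrite addr0 in H; apply: (addrI (D 0)); by rewrite -H addr0. Qed.
Lemma D1 : D 1 = 0.
Proof. have H := Dmul 1 1; rewrite !mul1r mulr1 in H; apply: (addrI (D 1)); by rewrite -H addr0. Qed.
Lemma Diota c : D (io c) = 0.
Proof. case: HD => _ _ H; by rewrite -[io c]mulr1 H D1 mulr0. Qed.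

Lemma iter0 n : iter n D 0 = 0.
Proof. elim: n => //= n ->; exact: D0. Qed.
Lemma iterD n x y : iter n D (x + y) = iter n D x + iter n D y.
Proof. elim: n => //= n ->; exact: Dadd. Qed.
Lemma iterN n x : iter n D (- x) = - iter n D x.
Proof. apply/eqP; rewrite -addr_eq0 -iterD addNr; exact/eqP/iter0. Qed.

Lemma Filt0 n : Filt D n 0.
Proof. exact: iter0. Qed.
Lemma FiltD n a b : Filt D n a -> Filt D n b -> Filt D n (a + b).
Proof. by rewrite /Filt iterD => -> ->; rewrite addr0. Qed.
Lemma FiltN n a : Filt D n a -> Filt D n (- a).
Proof. by rewrite /Filt iterN => ->; rewrite oppr0. Qed.
Lemma FiltB n a b : Filt D n a -> Filt D n b -> Filt D n (a - b).
Proof. by move=> ? ?; apply: FiltD => //; apply: FiltN. Qed.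
Lemma FiltS n a : Filt D n a -> Filt D n.+1 a.
Proof. by rewrite /Filt => H; rewrite iterS H D0. Qed.
Lemma Filt_le m n a : (m <= n)%N -> Filt D m a -> Filt D n a.
Proof. move/subnK <-; elim: (n - m)%N => //= d IH H; rewrite addSn; exact/FiltS/IH. Qed.
Lemma Filt_sum n (I : finType) (F : I -> A) :
  (forall i, Filt D n (F i)) -> Filt D n (\sum_i F i).
Proof. move=> H; apply: (big_ind (Filt D n)) => //; [exact: Filt0 | exact: FiltD]. Qed.
Lemma Filt_iota n c : Filt D n (io c).
Proof. apply: (@Filt_le 0) => //; exact: Diota. Qed.

Lemma FiltM m n a b : Filt D m a -> Filt D n b -> Filt D (m + n) (a * b).
Proof.
elim: m n a b => [|m IHm] n; elim: n => [|n IHn] a b Ha Hb;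
  rewrite /Filt iterSr Dmul iterD.
- move: Ha Hb; rewrite /Filt /= => -> ->; by rewrite mul0r mulr0 ?iter0 addr0.
- have -> : D a = 0 by exact: Ha.
  rewrite mul0r iter0 add0r.
  have Hb' : Filt D n (D b) by rewrite /Filt -iterSr.
  by have := IHn a (D b) Ha Hb'.
- have -> : D b = 0 by exact: Hb.
  rewrite mulr0 iter0 addr0.
  have Ha' : Filt D m (D a) by rewrite /Filt -iterSr.
  have := IHm 0%N (D a) b Ha' Hb; rewrite /Filt !addn0; exact.
- have Ha' : Filt D m (D a) by rewrite /Filt -iterSr.
  have Hb' : Filt D n (D b) by rewrite /Filt -iterSr.
  have H1 := IHm n.+1 (D a) b Ha' Hb; have H2 := IHn a (D b) Ha Hb'.
  move: H1 H2; rewrite /Filt addSn !addnS => -> ->.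
  by rewrite addr0.
Qed.

Definition hom n (p : {poly A}) : {poly A} := (p`_n)%:P * 'X^n.

Lemma coef_hom n p m : (hom n p)`_m = if m == n then p`_n else 0.
Proof. by rewrite /hom coefCM coefXn; case: eqP => _; rewrite ?mulr1 ?mulr0. Qed.

Lemma rees0 : rees D 0.
Proof. move=> n; rewrite coef0; exact: Filt0. Qed.
Lemma rees_const a : Filt D 0 a -> rees D a%:P.
Proof. move=> Ha n; rewrite coefC; case: n => [|n] //=; exact: Filt0. Qed.
Lemma rees_homF n a : Filt D n a -> rees D (a%:P * 'X^n).
Proof.
move=> Ha m; rewrite coefCM coefXn; case: eqP => [->|_]; rewrite ?mulr1 ?mulr0 //.
exact: Filt0.
Qed.
Lemma rees_hom n p : rees D p -> rees D (hom n p).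
Proof. by move=> Hp; apply: rees_homF. Qed.
Lemma rees_add p q : rees D p -> rees D q -> rees D (p + q).
Proof. by move=> Hp Hq n; rewrite coefD; apply: FiltD. Qed.
Lemma rees_mul p q : rees D p -> rees D q -> rees D (p * q).
Proof.
move=> Hp Hq n; rewrite coefM; apply: Filt_sum => i.
have Hi : (i <= n)%N by rewrite -ltnS.
rewrite -{1}(subnKC Hi); exact: FiltM.
Qed.
Lemma rees_polyj c : rees D (polyj io c).
Proof. apply: rees_const; exact: Filt_iota. Qed.
Lemma rees_X : rees D 'X.
Proof.
move=> n; rewrite coefX; case: n => [|[|n]] /=; try exact: Filt0.
rewrite /Filt /= D1; exact: D0.
Qed.
Lemma rees_closed : ksubalg_closed (polyj io) (rees D).
Proof. split; [exact: rees_polyj | exact: rees_add | exact: rees_mul]. Qed.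

Lemma poly_hom (p : {poly A}) : p = \sum_(i < size p) hom i p.
Proof.
rewrite -{1}[p]coefK poly_def; apply: eq_bigr => i _; by rewrite /hom mul_polyC.
Qed.
Lemma hom_add n p q : hom n (p + q) = hom n p + hom n q.
Proof. by rewrite /hom coefD polyCD mulrDl. Qed.
Lemma hom0 n : hom n 0 = 0.
Proof. by rewrite /hom coef0 mul0r. Qed.
Lemma hom_sum n (I : finType) (F : I -> {poly A}) :
  hom n (\sum_i F i) = \sum_i hom n (F i).
Proof. apply: (big_morph _ (hom_add n) (hom0 n)). Qed.
Lemma hom_big n : hom n = hom n. Proof. by []. Qed.
Lemma hom_mul n p q : hom n (p * q) = \sum_(j < n.+1) hom j p * hom (n - j) q.
Proof.
rewrite /hom coefM rmorph_sum mulr_suml; apply: eq_bigr => j _.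
have Hj : (j <= n)%N by rewrite -ltnS.
by rewrite mulrACA -polyCM -exprD (subnKC Hj).
Qed.
Lemma hom_out n (p : {poly A}) : (size p <= n)%N -> hom n p = 0.
Proof. by move=> H; rewrite /hom nth_default // mul0r. Qed.

Definition G (s : seq {poly A}) := in_gen_subalg (polyj io) s.

Lemma gen_closed s : ksubalg_closed (polyj io) (G s).
Proof.
split.
- by move=> c T [HT _ _] _.
- by move=> x y Hx Hy T HT Hs; case: (HT) => _ H _; apply: H; [exact: Hx | exact: Hy].
- by move=> x y Hx Hy T HT Hs; case: (HT) => _ _ H; apply: H; [exact: Hx | exact: Hy].
Qed.
Lemma gen_mem s y : y \in s -> G s y.
Proof. by move=> Hy T _ Hs; apply: Hs. Qed.
Lemma gen_sub s1 s2 x : {subset s1 <= s2} -> G s1 x -> G s2 x.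
Proof. by move=> Hs Hx; apply: Hx; [exact: gen_closed | move=> y /Hs; exact: gen_mem]. Qed.
Lemma gen_min s (T : {poly A} -> Prop) x :
  ksubalg_closed (polyj io) T -> (forall y, y \in s -> T y) -> G s x -> T x.
Proof. by move=> HT Hs Hx; apply: Hx. Qed.
Lemma gen_polyj s c : G s (polyj io c).
Proof. by case: (gen_closed s). Qed.
Lemma gen0 s : G s 0.
Proof. have := @gen_polyj s 0; by rewrite /polyj rmorph0 polyC0. Qed.
Lemma gen_add s x y : G s x -> G s y -> G s (x + y).
Proof. by case: (gen_closed s) => _ H _; apply: H. Qed.
Lemma gen_mul s x y : G s x -> G s y -> G s (x * y).
Proof. by case: (gen_closed s) => _ _ H; apply: H. Qed.
Lemma gen_sum s (I : finType) (F : I -> {poly A}) :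
  (forall i, G s (F i)) -> G s (\sum_i F i).
Proof. move=> H; apply: (big_ind (G s)) => //; [exact: gen0 | exact: gen_add]. Qed.

Definition Hsm m (s : seq {poly A}) :=
  flatten [seq [seq hom i y | i <- iota m (size y)] | y <- s].

Lemma Hsm_mem m s y i : y \in s -> (m <= i)%N -> hom i y \in Hsm m s \/ hom i y = 0.
Proof.
move=> Hy Hi; case: (ltnP i (m + size y)) => Hi2.
  left; apply/flattenP; exists [seq hom i y | i <- iota m (size y)]; first exact: map_f.
  by apply: map_f; rewrite mem_iota Hi Hi2.
right; apply: hom_out; apply: leq_trans Hi2; exact: leq_addl.
Qed.
Lemma Hsm_inv m s z : z \in Hsm m s -> exists y i, [/\ y \in s, (m <= i)%N & z = hom i y].
Proof.
move/flattenP => [ys /mapP [y Hy ->] /mapP [i Hi ->]].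
by exists y, i; split => //; move: Hi; rewrite mem_iota => /andP [].
Qed.

Lemma gen_hom s x : G s x -> forall n, G (Hsm 0 s) (hom n x).
Proof.
move=> Hx; apply: (@gen_min s (fun x => forall n, G (Hsm 0 s) (hom n x)) x _ _ Hx).
- split.
  + move=> c [|n]; rewrite /hom coefC /=.
      by rewrite expr0 mulr1; exact: gen_polyj.
    by rewrite mul0r; exact: gen0.
  + by move=> x1 y1 H1 H2 n; rewrite hom_add; apply: gen_add.
  + move=> x1 y1 H1 H2 n; rewrite hom_mul; apply: gen_sum => j; exact: gen_mul.
- move=> y Hy n; case: (@Hsm_mem 0 s y n Hy (leq0n n)) => [H|->]; [exact: gen_mem | exact: gen0].
Qed.

Lemma Impl12 : fg_subalg (polyj io) (rees D) -> gr_fg io D.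
Proof.
case=> s [sR Hs]; exists s; split => // p Rp; exists p; split; first by apply/Hs.
by move=> [|n]; rewrite subrr coef0 //=; exact: Filt0.
Qed.

Lemma Impl21 : gr_fg io D -> fg_subalg (polyj io) (rees D).
Proof.
case=> s [sR Hs].
set s' := 'X :: Hsm 0 s.
have s'R : forall y, y \in s' -> rees D y.
  move=> y; rewrite inE => /orP [/eqP -> | /Hsm_inv [z [i [Hz _ ->]]]].
    exact: rees_X.
  exact/rees_hom/sR.
have key : forall n a, Filt D n a -> G s' (a%:P * 'X^n).
  elim=> [|n IH] a Ha.
  - have Rp := rees_homF Ha; case: (Hs _ Rp) => q [Gq Heq].
    have H0 := Heq 0%N; rewrite /= coefB coefCM coefXn /= mulr1 in H0.
    have -> : a = q`_0 by apply/eqP; rewrite -subr_eq0 H0.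
    have := gen_hom Gq 0; rewrite /hom => H; apply: gen_sub H => y Hy.
    by rewrite inE Hy orbT.
  - have Rp := rees_homF Ha; case: (Hs _ Rp) => q [Gq Heq].
    have H0 := Heq n.+1; rewrite /= coefB coefCM coefXn eqxx mulr1 in H0.
    have -> : a%:P * 'X ^+ n.+1 = hom n.+1 q + 'X * ((a - q`_n.+1)%:P * 'X ^+ n).
      by rewrite /hom polyCB exprS; ring.
    apply: gen_add.
      have := gen_hom Gq n.+1 => H; apply: gen_sub H => y Hy.
      by rewrite inE Hy orbT.
    apply: gen_mul; [apply: gen_mem; exact: mem_head | exact: IH].
exists s'; split => // x; split.
- move=> Rx; rewrite (poly_hom x); apply: gen_sum => i; exact: key.
- exact: gen_min rees_closed s'R.
Qed.

Definition Mod (gl : seq {poly A}) x := exists c : 'I_(size gl) -> {poly A},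
  (forall i, rees D (c i)) /\ x = \sum_(i < size gl) c i * gl`_i.

Lemma rees1 : rees D 1.
Proof. have := rees_polyj 1; by rewrite /polyj rmorph1 polyC1. Qed.
Lemma Mod0 gl : Mod gl 0.
Proof. exists (fun _ => 0); split; [move=> _; exact: rees0 | by rewrite big1 // => i _; rewrite mul0r]. Qed.
Lemma ModD gl x y : Mod gl x -> Mod gl y -> Mod gl (x + y).
Proof.
move=> [c [Rc ->]] [c' [Rc' ->]]; exists (fun i => c i + c' i); split.
  by move=> i; apply: rees_add.
by rewrite -big_split; apply: eq_bigr => i _; rewrite mulrDl.
Qed.
Lemma ModM gl r x : rees D r -> Mod gl x -> Mod gl (r * x).
Proof.
move=> Rr [c [Rc ->]]; exists (fun i => r * c i); split.
  by move=> i; apply: rees_mul.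
by rewrite mulr_sumr; apply: eq_bigr => i _; rewrite mulrA.
Qed.
Lemma ModSum gl (I : finType) (F : I -> {poly A}) :
  (forall i, Mod gl (F i)) -> Mod gl (\sum_i F i).
Proof. move=> H; apply: (big_ind (Mod gl)) => //; [exact: Mod0 | exact: ModD]. Qed.
Lemma Mod_mem gl z : z \in gl -> Mod gl z.
Proof.
move=> Hz.
have Hj : (index z gl < size gl)%N by rewrite index_mem.
exists (fun i => if i == Ordinal Hj then 1 else 0); split.
  by move=> i; case: eqP => _; [exact: rees1 | exact: rees0].
rewrite (bigD1 (Ordinal Hj)) //= eqxx mul1r big1 ?addr0 ?nth_index //.
by move=> i /negbTE ->; rewrite mul0r.
Qed.

Lemma Filt0_closed : ksubalg_closed io (Filt D 0).
Proof. split; [exact: Filt_iota | exact: FiltD | move=> x y Hx Hy; exact: (FiltM Hx Hy)]. Qed.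

Lemma genB_closed (B : nzRingType) (j : k -> B) s : ksubalg_closed j (in_gen_subalg j s).
Proof.
split.
- by move=> c T [HT _ _] _.
- by move=> x y Hx Hy T HT Hs; case: (HT) => _ H _; apply: H; [exact: Hx | exact: Hy].
- by move=> x y Hx Hy T HT Hs; case: (HT) => _ _ H; apply: H; [exact: Hx | exact: Hy].
Qed.

Lemma Impl13 : fg_subalg (polyj io) (rees D) ->
  fg_subalg io (Filt D 0) /\ fg_submodule (rees D) (rees_plus D).
Proof.
case=> s [sR Hs]; split.
- exists [seq y`_0 | y : {poly A} <- s]; split.
    by move=> y /mapP [z Hz ->]; exact: sR.
  move=> x; split.
  + move=> Hx; have Gx : G s x%:P by apply/Hs/rees_const.
    have := @gen_min s (fun p => in_gen_subalg io [seq y`_0 | y : {poly A} <- s] p`_0) _ _ _ Gx.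
    rewrite coefC /=; apply.
      have [H1 H2 H3] := genB_closed io [seq y`_0 | y : {poly A} <- s].
      split.
      * by move=> c; rewrite /polyj coefC /=.
      * by move=> p q Hp Hq; rewrite coefD; apply: H2.
      * by move=> p q Hp Hq; rewrite coef0M; apply: H3.
    by move=> y Hy T _ Ht; apply: Ht; apply: map_f.
  + move=> Hx; apply: (Hx (Filt D 0)); first exact: Filt0_closed.
    by move=> y /mapP [z Hz ->]; exact: sR.
- set gl := Hsm 1 s.
  exists (size gl), (fun i => gl`_i); split.
    move=> i; have := mem_nth 0 (ltn_ord i); move/Hsm_inv => [y [j [Hy Hj ->]]].
    split; first exact/rees_hom/sR.
    by rewrite coef_hom; case: eqP => // E; rewrite -E in Hj.
  suff H : forall x, G s x -> rees D x /\ Mod gl (x - (x`_0)%:P).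
    move=> x [Rx x0]; have [_] := H x ((Hs x).1 Rx).
    by rewrite x0 polyC0 subr0.
  move=> x Gx; apply: (@gen_min s (fun x => rees D x /\ Mod gl (x - (x`_0)%:P)) x _ _ Gx).
    split.
    + move=> c; split; first exact: rees_polyj.
      by rewrite /polyj coefC /= subrr; exact: Mod0.
    + move=> p q [Rp Mp] [Rq Mq]; split; first exact: rees_add.
      have -> : p + q - ((p + q)`_0)%:P = (p - (p`_0)%:P) + (q - (q`_0)%:P).
        by rewrite coefD polyCD; ring.
      exact: ModD.
    + move=> p q [Rp Mp] [Rq Mq]; split; first exact: rees_mul.
      have -> : p * q - ((p * q)`_0)%:P = q * (p - (p`_0)%:P) + (p`_0)%:P * (q - (q`_0)%:P).
        by rewrite coef0M polyCM; ring.
      apply: ModD; apply: ModM => //; exact: rees_const.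
  move=> y Hy; split; first exact: sR.
  rewrite (poly_hom (y - _)); apply: ModSum => -[[|i] Hi] /=.
    by rewrite /hom coefB coefC /= subrr polyC0 mul0r; exact: Mod0.
  have -> : hom i.+1 (y - (y`_0)%:P) = hom i.+1 y by rewrite /hom coefB coefC /= subr0.
  case: (@Hsm_mem 1 s y i.+1 Hy isT) => [H|->]; [exact: Mod_mem | exact: Mod0].
Qed.

Lemma Impl31 : fg_subalg io (Filt D 0) /\ fg_submodule (rees D) (rees_plus D) ->
  fg_subalg (polyj io) (rees D).
Proof.
case=> [[t [tF Ht]] [n [g [gM Hg]]]].
set gs := [seq g i | i <- enum 'I_n].
set s' := [seq a%:P | a <- t] ++ Hsm 0 gs.
have s'R : forall y, y \in s' -> rees D y.
  move=> y; rewrite mem_cat => /orP [/mapP [a Ha ->] | /Hsm_inv [z [i [Hz _ ->]]]].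
    exact/rees_const/tF.
  apply: rees_hom; move: Hz => /mapP [j _ ->]; exact: (gM j).1.
have key : forall N a, Filt D N a -> G s' (a%:P * 'X^N).
  move=> N; elim/ltn_ind: N => N IH a Ha; case: N IH Ha => [|N] IH Ha.
  - rewrite expr0 mulr1; have := (Ht a).1 Ha.
    move=> H; apply: (H (fun b => G s' b%:P)); first split.
    + by move=> c; exact: gen_polyj.
    + by move=> b1 b2 H1 H2; rewrite polyCD; apply: gen_add.
    + by move=> b1 b2 H1 H2; rewrite polyCM; apply: gen_mul.
    + by move=> b Hb; apply: gen_mem; rewrite mem_cat map_f.
  - set p := a%:P * 'X ^+ N.+1.
    have Mp : rees_plus D p.
      by split; [exact: rees_homF | rewrite /p coefCM coefXn /= mulr0].
    have [c [Rc Hp]] := Hg p Mp.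
    have -> : p = hom N.+1 p by rewrite /hom /p coefCM coefXn eqxx mulr1.
    rewrite Hp hom_sum; apply: gen_sum => i; rewrite hom_mul; apply: gen_sum => j.
    case: (ltnP j N.+1) => Hj.
      apply: gen_mul; first by apply: IH => //; exact: Rc.
      have Hgi : g i \in gs by rewrite map_f ?mem_enum.
      case: (@Hsm_mem 0 gs (g i) (N.+1 - j) Hgi isT) => [H|->].
        by apply: gen_mem; rewrite mem_cat H orbT.
      exact: gen0.
    have Ej : nat_of_ord j = N.+1 by apply/eqP; rewrite eqn_leq Hj -ltnS ltn_ord.
    rewrite Ej subnn /hom (gM i).2 mul0r mulr0; exact: gen0.
exists s'; split => // x; split.
- move=> Rx; rewrite (poly_hom x); apply: gen_sum => i; exact: key.
- exact: gen_min rees_closed s'R.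
Qed.

End Aux.

Theorem lemma2p8 (k : closedFieldType) (A : idomainType)
    (iota : {rmorphism k -> A}) (D : A -> A) :
  [pchar k] =i pred0 ->
  finite_type iota ->
  normal_domain A ->
  is_kderivation iota D ->
  locally_nilpotent D ->
  [/\ (fg_subalg (polyj iota) (rees D) <-> gr_fg iota D),
      (gr_fg iota D <->
         (fg_subalg iota (Filt D 0) /\ fg_submodule (rees D) (rees_plus D))) &
      (fg_subalg (polyj iota) (rees D) <->
         (fg_subalg iota (Filt D 0) /\ fg_submodule (rees D) (rees_plus D)))].
Proof.
move=> _ _ _ HD _.
have h12 : fg_subalg (polyj iota) (rees D) -> gr_fg iota D by apply: Impl12.
have h21 : gr_fg iota D -> fg_subalg (polyj iota) (rees D) by apply: Impl21.
have h13 : fg_subalg (polyj iota) (rees D) ->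
  fg_subalg iota (Filt D 0) /\ fg_submodule (rees D) (rees_plus D) by apply: Impl13.
have h31 : fg_subalg iota (Filt D 0) /\ fg_submodule (rees D) (rees_plus D) ->
  fg_subalg (polyj iota) (rees D) by apply: Impl31.
split; split; auto.
Qed.
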